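(* Let $F_1$ and $F_2$ be sensori-computational devices, and let $R_1\subseteq A\times B$ and $R_2\subseteq C\times E$ be length compatible relations such that $F_1$ is output simulatable modulo $R_1$ and $F_2$ is output simulatable modulo $R_2$. Define the relation $R_{1\times2}$ on sequences of pairs by: $\big((a_1,c_1)\cdots(a_n,c_n)\big)\,R_{1\times2}\,\big((b_1,e_1)\cdots(b_m,e_m)\big)$ if and only if $(a_1\cdots a_n)\,R_1\,(b_1\cdots b_m)$ and $(c_1\cdots c_n)\,R_2\,(e_1\cdots e_m)$. Then the direct product $F_1\times F_2$ is output simulatable modulo $R_{1\times2}$.
   Context: A sensori-computational device is a 6-tuple $F=(V,V_0,Y,\tau,C,c)$ where $V$ is a non-empty finite set of states, $V_0\subseteq V$ a non-empty set of initial states, $Y=Y(F)$ a finite set of observations, $\tau:V\times V\to\mathcal{P}(Y)$, $C$ a set of outputs, $c:V\to\mathcal{P}(C)\setminus\{\emptyset\}$. A string $y_1\cdots y_n$ reaches $w$ from $v$ if there are states $w_0=v,\dots,w_n=w$ with $y_i\in\tau(w_{i-1},w_i)$; $\mathcal{R}_F(s)$ is the set of states reached by $s$ from some initial state; $\mathcal{L}(F)=\{s\in Y^*:\mathcal{R}_F(s)\ne\emptyset\}$; $\mathcal{C}_F(s)=\bigcup_{v\in\mathcal{R}_F(s)}c(v)$. For a relation $R\subseteq A\times B$ between sets of strings, $F'$ output simulates $F$ modulo $R$ if for every $s\in\mathcal{L}(F)$: (1) some $t\in\mathcal{L}(F')$ has $s\,R\,t$; (2) every $t\in B$ with $s\,R\,t$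 satisfies $t\in\mathcal{L}(F')$ and $\mathcal{C}_F(s)\supseteq\mathcal{C}_{F'}(t)$; $F$ is output simulatable modulo $R$ if some device $F'$ output simulates $F$ modulo $R$. The direct product of $F=(V,V_0,Y,\tau,C,c)$ and $F'=(V',V_0',Y',\tau',C',c')$ is $F\times F'=(V\times V',V_0\times V_0',Y\times Y',\tau_{\times},C\times C',c_{\times})$ with $\tau_\times((v,v'),(w,w'))=\tau(v,w)\times\tau'(v',w')$ and $c_\times(v,v')=c(v)\times c'(v')$. Relations $R_1\subseteq A\times B$ and $R_2\subseteq C\times E$, where $A,B,C,E$ are sets of sequences over some alphabets, are length compatible if for every $a\in A$ and $c\in C$ with $|a|=|c|$ there exist $b$ and $e$ with $|b|=|e|$, $a\,R_1\,b$ and $c\,R_2\,e$. *)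

(* Defs.v *)
From Stdlib Require List.
From mathcomp Require Import all_boot.
Set Implicit Arguments. Unset Strict Implicit. Unset Printing Implicit Defensive.

(* A sensori-computational device with observations drawn from the type Y
   and outputs from the type C.
   - st : finite (non-empty, because init is non-empty) state set V
   - init : V_0, a non-empty subset of V
   - obs : the finite observation set Y(F) (as a list)
   - tau v w : the subset tau(v,w) of Y(F)
   - out v : the non-empty subset c(v) of C *)
Record device (Y C : Type) := Device {
  st : finType;
  init : st -> Prop;
  init_ne : exists v, init v;
  obs : list Y;
  tau : st -> st -> Y -> Prop;
  tau_obs : forall v w y, tau v w y -> List.In y obs;
  out : st -> C -> Prop;
  out_ne : forall v, exists x, out v x
}.
Arguments st {Y C} d.
Arguments init {Y C} d _.
Arguments obs {Y C} d.
Arguments tau {Y C} d _ _ _.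
Arguments out {Y C} d _ _.
Arguments init_ne {Y C} d.
Arguments tau_obs {Y C} d {v w y} _.
Arguments out_ne {Y C} d v.

Section Semantics.
Variables (Y C : Type) (F : device Y C).

Fixpoint reaches (s : seq Y) (v w : st F) : Prop :=
  match s with
  | [::] => v = w
  | y :: s' => exists u, tau F v u y /\ reaches s' u w
  end.

Definition reached (s : seq Y) (w : st F) : Prop :=
  exists v, init F v /\ reaches s v w.

Definition lang (s : seq Y) : Prop := exists w, reached s w.

Definition outs (s : seq Y) (x : C) : Prop :=
  exists v, reached s v /\ out F v x.
End Semantics.

Definition output_simulates (Y Y' C : Type) (R : seq Y -> seq Y' -> Prop)
    (F : device Y C) (F' : device Y' C) : Prop :=
  forall s, lang F s ->
    (exists t, lang F' t /\ R s t) /\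
    (forall t, R s t -> lang F' t /\ (forall x, outs F' t x -> outs F s x)).

Definition output_simulatable (Y Y' C : Type) (R : seq Y -> seq Y' -> Prop)
    (F : device Y C) : Prop :=
  exists F' : device Y' C, output_simulates R F F'.

Definition rel_in (T U : Type) (A : seq T -> Prop) (B : seq U -> Prop)
    (R : seq T -> seq U -> Prop) : Prop :=
  forall a b, R a b -> A a /\ B b.

Definition length_compatible (T1 U1 T2 U2 : Type)
    (A : seq T1 -> Prop) (C : seq T2 -> Prop)
    (R1 : seq T1 -> seq U1 -> Prop) (R2 : seq T2 -> seq U2 -> Prop) : Prop :=
  forall a c, A a -> C c -> size a = size c ->
    exists b e, size b = size e /\ R1 a b /\ R2 c e.

Definition rel_prod (T1 U1 T2 U2 : Type)
    (R1 : seq T1 -> seq U1 -> Prop) (R2 : seq T2 -> seq U2 -> Prop)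
    (p : seq (T1 * T2)) (q : seq (U1 * U2)) : Prop :=
  R1 (unzip1 p) (unzip1 q) /\ R2 (unzip2 p) (unzip2 q).

Section Product.
Variables (Y1 C1 Y2 C2 : Type) (F1 : device Y1 C1) (F2 : device Y2 C2).

Definition prod_init (vv : (st F1 * st F2)%type) : Prop :=
  init F1 vv.1 /\ init F2 vv.2.
Definition prod_tau (vv ww : (st F1 * st F2)%type) (yy : Y1 * Y2) : Prop :=
  tau F1 vv.1 ww.1 yy.1 /\ tau F2 vv.2 ww.2 yy.2.
Definition prod_out (vv : (st F1 * st F2)%type) (xx : C1 * C2) : Prop :=
  out F1 vv.1 xx.1 /\ out F2 vv.2 xx.2.

Lemma prod_init_ne : exists vv, prod_init vv.
Proof.
have [v Hv] := init_ne F1; have [w Hw] := init_ne F2.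
by exists (v, w); split.
Qed.

Lemma prod_tau_obs vv ww yy :
  prod_tau vv ww yy -> List.In yy (List.list_prod (obs F1) (obs F2)).
Proof.
case: yy => y1 y2 [/= H1 H2]; apply: List.in_prod.
- exact: (tau_obs F1 H1).
- exact: (tau_obs F2 H2).
Qed.

Lemma prod_out_ne vv : exists xx, prod_out vv xx.
Proof.
have [x Hx] := out_ne F1 vv.1; have [y Hy] := out_ne F2 vv.2.
by exists (x, y); split.
Qed.

Definition prod_device : device (Y1 * Y2) (C1 * C2) :=
  @Device _ _ (st F1 * st F2)%type prod_init prod_init_ne
    (List.list_prod (obs F1) (obs F2)) prod_tau prod_tau_obs
    prod_out prod_out_ne.
End Product.

(* Main.v *)
Require Import Defs.
From mathcomp Require Import all_boot.

Section Aux.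
Variables (Y1 C1 Y2 C2 : Type) (F1 : device Y1 C1) (F2 : device Y2 C2).

Lemma reaches_prod (s : seq (Y1 * Y2)) (v w : st (prod_device F1 F2)) :
  @reaches _ _ (prod_device F1 F2) s v w <->
  @reaches _ _ F1 (unzip1 s) v.1 w.1 /\ @reaches _ _ F2 (unzip2 s) v.2 w.2.
Proof.
elim: s v => [|y s IH] v /=.
  split; first by move=> ->.
  by case: v w => a b [c d] /= [-> ->].
split.
  move=> [u [[H1 H2] /IH [R1 R2]]]; split; by [exists u.1 | exists u.2].
move=> [[u1 [H1 R1]] [u2 [H2 R2]]]; exists (u1, u2); split; first by split.
by apply/IH.
Qed.

Lemma reached_prod (s : seq (Y1 * Y2)) (w : st (prod_device F1 F2)) :
  @reached _ _ (prod_device F1 F2) s w <->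
  @reached _ _ F1 (unzip1 s) w.1 /\ @reached _ _ F2 (unzip2 s) w.2.
Proof.
split.
  by move=> [v [[I1 I2] /reaches_prod [R1 R2]]]; split; [exists v.1 | exists v.2].
move=> [[v1 [I1 R1]] [v2 [I2 R2]]]; exists (v1, v2); split; first by split.
by apply/reaches_prod.
Qed.

Lemma lang_prod (s : seq (Y1 * Y2)) :
  lang (prod_device F1 F2) s <-> lang F1 (unzip1 s) /\ lang F2 (unzip2 s).
Proof.
split.
  by move=> [w /reached_prod [H1 H2]]; split; [exists w.1 | exists w.2].
move=> [[w1 H1] [w2 H2]]; exists (w1, w2); exact/reached_prod.
Qed.

Lemma outs_prod (s : seq (Y1 * Y2)) (x : C1 * C2) :
  outs (prod_device F1 F2) s x <-> outs F1 (unzip1 s) x.1 /\ outs F2 (unzip2 s) x.2.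
Proof.
split.
  move=> [w [/reached_prod [H1 H2] [O1 O2]]]; split; by [exists w.1 | exists w.2].
move=> [[w1 [H1 O1]] [w2 [H2 O2]]]; exists (w1, w2); split; last by split.
exact/reached_prod.
Qed.
End Aux.

Theorem proposition3
    (Y1 C1 Y2 C2 U1 U2 : Type) (F1 : device Y1 C1) (F2 : device Y2 C2)
    (A : seq Y1 -> Prop) (B : seq U1 -> Prop)
    (C : seq Y2 -> Prop) (E : seq U2 -> Prop)
    (R1 : seq Y1 -> seq U1 -> Prop) (R2 : seq Y2 -> seq U2 -> Prop) :
  rel_in A B R1 -> rel_in C E R2 ->
  length_compatible A C R1 R2 ->
  output_simulatable R1 F1 -> output_simulatable R2 F2 ->
  output_simulatable (rel_prod R1 R2) (prod_device F1 F2).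
Proof.
move=> in1 in2 lc [G1 S1] [G2 S2].
exists (prod_device G1 G2) => s /lang_prod [L1 L2].
have [[[t1 [_ T1]] H1] [[t2 [_ T2]] H2]] := (S1 _ L1, S2 _ L2).
split.
  have [a _] := in1 _ _ T1; have [c _] := in2 _ _ T2.
  have [b [e [Hbe [Rb Re]]]] := lc _ _ a c (etrans (size_map _ _) (esym (size_map _ _))).
  exists (zip b e).
  rewrite /rel_prod unzip1_zip ?Hbe // unzip2_zip ?Hbe //.
  split; last by split.
  apply/lang_prod; rewrite unzip1_zip ?Hbe // unzip2_zip ?Hbe //.
  by split; [case: (H1 _ Rb) | case: (H2 _ Re)].
move=> t [Rt1 Rt2].
have [Lt1 O1] := H1 _ Rt1; have [Lt2 O2] := H2 _ Rt2.
split; first exact/lang_prod.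
move=> x /outs_prod [X1 X2]; apply/outs_prod; split; by [apply: O1 | apply: O2].
Qed.
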